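(* Consider a group of $p'$ PEs where PE $i$ holds a sorted string array $S_i'$ and let $V_i$ be the sample strings drawn by PE $i$ under character-based regular sampling with sampling distance $\omega'$. For $i\in\{0,\dots,p'-1\}$ let $S_i''=\{s\in S_i': a\le s\le b\}$ be an arbitrary contiguous subsequence of $S_i'$. If $|S_i''\cap V_i|=k$ for a nonnegative integer $k$, then $\|S_i''\|\le(k+1)(\omega'+\hat{\ell})$.
   Context: $\hat{\ell}$ is the length of the longest string and $\|X\|$ the number of characters of a set of strings $X$. Character-based regular sampling: with $\omega'=\|S'\|/(p'(v+1))$ for the concatenation $S'$ of the group's arrays and a sampling factor $v$, PE $i$ draws $\lceil\|S_i'\|/\omega'\rceil-1$ equally spaced positions in its character array (the concatenation of the characters of its strings in sorted order), so that fewer than $\omega'$ characters lie between consecutive sampled positions; each sampled position is shifted by at most $\hat{\ell}-1$ towards the beginning of the string containing it, and the strings thus reached form $V_i$. *)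

(* Defs.v *)
From mathcomp Require Import all_boot all_order all_algebra.
Set Implicit Arguments. Unset Strict Implicit. Unset Printing Implicit Defensive.
Import Order.TTheory GRing.Theory Num.Theory.

Definition str := seq nat.

Fixpoint lexle (s t : str) : bool :=
  match s, t with
  | [::], _ => true
  | _ :: _, [::] => false
  | a :: s', b :: t' => (a < b)%N || ((a == b) && lexle s' t')
  end.

Definition nchars (X : seq str) : nat := sumn (map size X).

(* Index (in S) of the string whose character range (in the concatenation of
   the strings of S) contains character position pos : the least t with
   pos < ||take t.+1 S||.  Reaching the beginning of that string is the
   "shift towards the beginning of the string containing it". *)
Definition string_at (S : seq str) (pos : nat) : nat :=
  find (fun t => (pos < nchars (take t.+1 S))%N) (iota 0 (size S)).

Local Open Scope ring_scope.

Definition omega' (p' : nat) (S : 'I_p' -> seq str) (v : nat) : rat :=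
  (\sum_(j < p') nchars (S j))%N%:R / (p' * v.+1)%N%:R.

Definition nsamples (N : nat) (w : rat) : nat :=
  (`|Num.ceil (N%:R / w)|%N).-1.

(* the j-th (1 <= j <= m) equally spaced sampled character position *)
Definition sample_pos (N m j : nat) : nat :=
  Num.truncn ((j * N)%N%:R / (m.+1)%:R : rat).

(* V_i, given as the list of indices (into S_i') of the sampled strings. *)
Definition sample_idx (Si : seq str) (w : rat) : seq nat :=
  let N := nchars Si in
  let m := nsamples N w in
  [seq string_at Si (sample_pos N m j) | j <- iota 1 m].

(* Main.v *)
Require Import Defs.
From mathcomp Require Import all_boot all_order all_algebra.
From mathcomp Require Import lra zify.
Import Order.TTheory GRing.Theory Num.Theory.
Local Open Scope ring_scope.

Lemma gap_arith (N : nat) (w : rat) (A B : nat) : (0 < N)%N -> 0 < w -> (A <= B <= N)%N ->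
 (forall j, (1 <= j <= nsamples N w)%N -> ~~ (A <= sample_pos N (nsamples N w) j < B)%N) ->
 B%:R <= A%:R + w.
Proof.
move=> N0 w0 /andP[AB BN] Hj.
set m := nsamples N w in Hj *.
have Nw0 : 0 < N%:R / w by rewrite divr_gt0 // ltr0n.
have hm : (m.+1)%:R = (Num.ceil (N%:R / w))%:~R :> rat.
  have c0 : 0 < Num.ceil (N%:R / w) by rewrite ceil_gt0.
  rewrite /m /nsamples prednK; last by rewrite absz_gt0 gt_eqF.
  by rewrite natr_absz gtr0_norm.
have hq : N%:R / m.+1%:R <= w.
  rewrite ler_pdivrMr ?ltr0n // hm.
  have := ceil_ge (N%:R / w); rewrite ler_pdivrMr // => h.
  by rewrite mulrC.
set q := N%:R / m.+1%:R in hq.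
have q0 : 0 <= q by rewrite divr_ge0.
have hf : forall j, sample_pos N m j = Num.truncn (j%:R * q).
  by move=> j; rewrite /sample_pos natrM mulrA.
have fle : forall j, (sample_pos N m j)%:R <= j%:R * q.
  by move=> j; rewrite hf truncn_le mulr_ge0.
have fgt : forall j, j%:R * q < (sample_pos N m j).+1%:R.
  by move=> j; rewrite hf truncnS_gt.
have fmax : sample_pos N m m.+1 = N.
  rewrite hf /q mulrC divfK ?pnatr_eq0 //.
  by apply: truncn_def; rewrite lexx /= ltr_nat.
have ex : exists j, (0 < j)%N && (A <= sample_pos N m j)%N.
  by exists m.+1; rewrite fmax (leq_trans AB BN).
case: (ex_minnP ex) => js /andP[js0 hAjs] hmin.
have js_le : (js <= m.+1)%N by apply: hmin; rewrite fmax (leq_trans AB BN).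
have hB : (B <= sample_pos N m js)%N.
  case: (ltnP m js) => hjm.
    have -> : js = m.+1 by apply/eqP; rewrite eqn_leq js_le hjm.
    by rewrite fmax.
  have := Hj js; rewrite js0 hjm hAjs /= => /(_ isT); by rewrite -leqNgt.
have hA : (js.-1)%:R * q <= A%:R.
  case E: js.-1 => [|j1]; first by rewrite mul0r ler0n.
  have j1p : (0 < j1.+1)%N by [].
  have nA : ~~ (A <= sample_pos N m j1.+1)%N.
    apply/negP => h; have := hmin _ (introT andP (conj j1p h)).
    by rewrite -E; case: (js) js0 => // n _; rewrite /= ltnn.
  rewrite -ltnNge in nA.
  apply: le_trans (ltW (fgt _)) _; by rewrite ler_nat.
have : B%:R <= js%:R * q.
  apply: le_trans (fle js); by rewrite ler_nat.
have -> : js%:R = (js.-1)%:R + 1 :> rat by rewrite natr1 prednK.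
rewrite mulrDl mul1r => h; lra.
Qed.

Definition cc (Si : seq str) t := nchars (take t Si).

Lemma cc_split Si lo hi : (lo <= hi)%N ->
  cc Si hi = (cc Si lo + nchars (drop lo (take hi Si)))%N.
Proof.
move=> h; rewrite /cc -{1}(cat_take_drop lo (take hi Si)) take_takel //.
by rewrite /nchars map_cat sumn_cat.
Qed.

Lemma cc_mono Si lo hi : (lo <= hi)%N -> (cc Si lo <= cc Si hi)%N.
Proof. by move=> h; rewrite (cc_split _ _ _ h) leq_addr. Qed.

Lemma ccS Si t : (t < size Si)%N -> cc Si t.+1 = (cc Si t + size (nth [::] Si t))%N.
Proof.
move=> h; rewrite /cc (take_nth [::] h) -cats1 /nchars map_cat sumn_cat /=.
by rewrite addn0.
Qed.

Lemma string_at_in Si lo hi pos : (lo <= hi <= size Si)%N ->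
  (cc Si lo <= pos < cc Si hi)%N -> (lo <= string_at Si pos < hi)%N.
Proof.
move=> /andP[lh hn] /andP[lp ph].
have hi0 : (0 < hi)%N.
  case: hi lh hn ph => // ; rewrite leqn0 => /eqP E _ h; move: lp; rewrite E => lp.
  by have := leq_ltn_trans lp h; rewrite ltnn.
set P := (fun t => pos < nchars (take t.+1 Si))%N.
have hasP' : has P (iota 0 (size Si)).
  apply/hasP; exists hi.-1; first by rewrite mem_iota /=; lia.
  by rewrite /P prednK.
rewrite /string_at -/P.
set t := find P _.
have tn : (t < size Si)%N by rewrite -[X in (_ < X)%N](size_iota 0) -has_find.
have Pt : P t by have := nth_find 0 hasP'; rewrite nth_iota.
rewrite /P in Pt.
apply/andP; split.
  rewrite leqNgt; apply/negP => tl.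
  have := cc_mono Si _ _ tl; rewrite /cc => h; have := leq_ltn_trans lp (leq_trans Pt h).
  by rewrite ltnn.
rewrite ltnNge; apply/negP => ht.
have t0 : (0 < t)%N by lia.
have tt : (t.-1 < t)%N by rewrite ltn_predL.
have := before_find 0 tt.
rewrite nth_iota; last by lia.
rewrite add0n /P prednK // => /negbT; rewrite -leqNgt => hct.
have := cc_mono Si _ _ ht; rewrite /cc => h.
have := leq_ltn_trans (leq_trans h hct) ph. by rewrite ltnn.
Qed.

Lemma nohit Si w lo hi : 0 < w -> (lo <= hi <= size Si)%N ->
  (forall t, (lo <= t < hi)%N -> t \notin sample_idx Si w) ->
  (cc Si hi)%:R <= (cc Si lo)%:R + w.
Proof.
move=> w0 hlh H.
have ccN : cc Si (size Si) = nchars Si by rewrite /cc take_size.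
case/andP: (hlh) => lh hn.
case: (posnP (nchars Si)) => N0.
  have : (cc Si hi <= nchars Si)%N by rewrite -ccN cc_mono.
  rewrite N0 leqn0 => /eqP ->; rewrite ler_wpDl ?ler0n // ltW //.
apply: (@gap_arith (nchars Si)) => //.
  by rewrite cc_mono //= -ccN cc_mono.
move=> j hj; apply/negP => hA.
have := string_at_in _ _ _ _ hlh hA => /H; apply/negP; rewrite negbK.
rewrite /sample_idx; apply/mapP; exists j => //.
by rewrite mem_iota; lia.
Qed.

Lemma mainl Si w L k : 0 < w -> (forall s, s \in Si -> (size s <= L)%N) ->
  forall lo hi, (lo <= hi <= size Si)%N ->
  count (fun t => t \in sample_idx Si w) (iota lo (hi - lo)) = k ->
  (cc Si hi)%:R <= (cc Si lo)%:R + k.+1%:R * w + k%:R * L%:R.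
Proof.
move=> w0 HL; elim: k => [|k IH] lo hi hlh Hk.
  rewrite mul0r addr0 mul1r; apply: nohit => // t ht.
  have : ~~ has (fun t => t \in sample_idx Si w) (iota lo (hi - lo)).
    by rewrite has_count Hk.
  move/hasPn; apply; rewrite mem_iota; lia.
have : has (fun t => t \in sample_idx Si w) (iota lo (hi - lo)).
  by rewrite has_count Hk.
case/hasP => t0; rewrite mem_iota => ht0 Ht0.
have ex : exists t, (lo <= t < hi)%N && (t \in sample_idx Si w).
  by exists t0; rewrite Ht0 andbT; apply/andP; lia.
case: (ex_minnP ex) => t /andP[ht Ht] hmin.
have [lh hn] := andP hlh. have [ht1 ht2] := andP ht.
have E : iota lo (hi - lo) = iota lo (t - lo) ++ t :: iota t.+1 (hi - t.+1).
  have -> : (hi - lo = (t - lo) + (hi - t.+1).+1)%N by lia.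
  rewrite iotaD; congr (_ ++ _); have -> : (lo + (t - lo) = t)%N by lia.
  by [].
move: Hk; rewrite E count_cat /= Ht.
have -> : count (fun t => t \in sample_idx Si w) (iota lo (t - lo)) = 0%N.
  apply/eqP; rewrite -leqn0 leqNgt -has_count; apply/hasPn => x.
  rewrite mem_iota => hx; apply/negP => Hx.
  have : (t <= x)%N by apply: hmin; rewrite Hx andbT; apply/andP; lia.
  lia.
rewrite add0n add1n => -[Hk].
have IH' := IH t.+1 hi ltac:(apply/andP; lia) Hk.
have hlt : (lo <= t <= size Si)%N by apply/andP; lia.
have G : (cc Si t)%:R <= (cc Si lo)%:R + w.
  apply: nohit => // x /andP[hx1 hx2]; apply/negP => Hx.
  have : (t <= x)%N by apply: hmin; rewrite Hx andbT; apply/andP; lia.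
  lia.
have tn : (t < size Si)%N by lia.
have S1 : (cc Si t.+1)%:R <= (cc Si t)%:R + L%:R :> rat.
  rewrite ccS // -natrD ler_nat leq_add2l; apply: HL; exact: mem_nth.
have -> : (k.+2)%:R = (k.+1)%:R + 1 :> rat by rewrite natr1.
have -> : (k.+1)%:R = (k%:R) + 1 :> rat by rewrite natr1.
move: IH'; rewrite -natr1.
lra.
Qed.

Theorem lemma17 (p' : nat) (S : 'I_p' -> seq str) (v : nat) (lhat : nat)
  (Hsorted : forall j : 'I_p', sorted lexle (S j))
  (Hlhat : forall (j : 'I_p') (s : str), s \in S j -> (size s <= lhat)%N)
  (i : 'I_p') (lo hi : nat) (Hlohi : (lo <= hi <= size (S i))%N) (k : nat)
  (Hk : count (fun t => t \in sample_idx (S i) (omega' S v)) (iota lo (hi - lo)) = k) :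
  ((nchars (drop lo (take hi (S i))))%:R : rat)
    <= (k.+1)%:R * (omega' S v + lhat%:R).
Proof.
have [lh hn] := andP Hlohi.
have E := cc_split (S i) lo hi lh.
have Esub : nchars (drop lo (take hi (S i))) = (cc (S i) hi - cc (S i) lo)%N by lia.
have p0 : (0 < p')%N by apply: leq_ltn_trans (ltn_ord i).
have w0 : 0 <= omega' S v by rewrite /omega' divr_ge0.
have L0 : 0 <= lhat%:R :> rat by rewrite ler0n.
have k0 : 0 <= k%:R :> rat by rewrite ler0n.
case: (posnP (nchars (S i))) => N0.
  have : (cc (S i) hi <= nchars (S i))%N.
    have ccN : cc (S i) (size (S i)) = nchars (S i) by rewrite /cc take_size.
    by rewrite -ccN cc_mono.
  rewrite N0 leqn0 => /eqP h; rewrite Esub h sub0n mulr_ge0 ?ler0n //.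
  by rewrite addr_ge0.
have wp : 0 < omega' S v.
  rewrite /omega' divr_gt0 // ltr0n ?muln_gt0 ?p0 //.
  by rewrite (bigD1 i) //= ltn_addr.
have M := mainl (S i) (omega' S v) lhat k wp (fun s hs => Hlhat i s hs) lo hi Hlohi Hk.
rewrite Esub natrB ?cc_mono //.
have -> : (k.+1)%:R = (k%:R) + 1 :> rat by rewrite natr1.
move: M; rewrite -natr1 => M.
nra.
Qed.
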